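(* Let $G$ be a finite group and let $H,K$ be subgroups of $G$ with $\Pr(H,K)\ge\epsilon>0$. Then there exists a subset $X$ of $H$ such that, for $H_0=\langle X\rangle$: (1) $|H:H_0|\le 2/\epsilon-1$; (2) $|K:C_K(x)|\le 2/\epsilon$ for every $x\in X$; (3) $|K:C_K(x)|\le (2/\epsilon)^{6/\epsilon}$ for every $x\in H_0$.
   Context: For subsets $X,Y$ of a finite group, $\Pr(X,Y)=|\{(x,y)\in X\times Y: xy=yx\}|/(|X||Y|)$. *)

(* Defs.v *)
From HB Require Import structures.
From mathcomp Require Import all_boot all_order all_algebra all_fingroup.
From mathcomp Require Import reals exp.
Set Implicit Arguments. Unset Strict Implicit. Unset Printing Implicit Defensive.
Import GRing.Theory Num.Theory.
Local Open Scope ring_scope.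

Definition commprob (R : realType) (gT : finGroupType) (X Y : {set gT}) : R :=
  (#|[set p in setX X Y | (p.1 * p.2 == p.2 * p.1)%g]|)%:R / (#|X| * #|Y|)%:R.

(* Main.v *)
Require Import Defs.
From HB Require Import structures.
From mathcomp Require Import all_boot all_order all_algebra all_fingroup.
From mathcomp Require Import reals exp.
From mathcomp Require Import ring lra zify.
Import Order.TTheory GRing.Theory Num.Theory.
Local Open Scope ring_scope.

Set Implicit Arguments. Unset Strict Implicit.
Section Aux.
Local Open Scope group_scope.
Variable gT : finGroupType.
Implicit Types (A B K : {group gT}) (X : {set gT}).

Lemma index_cap K A B : A \subset K -> (#|K : A :&: B| <= #|K : A| * #|K : B|)%N.
Proof.
move=> sAK.
rewrite -(Lagrange_index sAK (subsetIl A B)) leq_mul2l indexgI; apply/orP; right.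
have h1 := LagrangeMr A B; have h2 := LagrangeMr K B.
have h3 : (#|(A * B)%g| <= #|(K * B)%g|)%N by apply: subset_leq_card; apply: mulSg.
by rewrite -h1 -h2 leq_pmul2r ?cardG_gt0 in h3.
Qed.

Lemma index_centM K w y :
  (#|K : 'C_K[w * y]| <= #|K : 'C_K[w]| * #|K : 'C_K[y]|)%N.
Proof.
apply: leq_trans _ (@index_cap K ('C_K[w])%G ('C_K[y])%G (subsetIl _ _)).
apply: dvdn_leq; first exact: indexg_gt0.
apply: indexgS; apply/subsetP => z; rewrite !in_setI => /andP[/andP[zK zw] /andP[_ zy]].
by rewrite zK /= cent1C groupM // -cent1C.
Qed.

Lemma cent1Vg x : 'C[x^-1] = 'C[x] :> {set gT}.
Proof. by apply/setP => z; rewrite cent1C groupV -cent1C. Qed.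

Fixpoint W X n : {set gT} := if n is m.+1 then (W X m * X)%g else 1%g.

Lemma W_succ X n : 1%g \in X -> W X n \subset W X n.+1.
Proof. by move=> X1; apply: mulg_subl. Qed.

Lemma W_gen X n : W X n \subset <<X>>.
Proof.
elim: n => [|n IH] /=; first by rewrite sub1G.
apply/subsetP => z; case/mulsgP => u v uW vX ->.
apply: groupM; [exact: (subsetP IH) | exact: mem_gen].
Qed.

Lemma W_prop X n m : W X n != W X n.+1 -> (m <= n)%N -> W X m != W X m.+1.
Proof.
elim: n => [|n IH] neq; first by rewrite leqn0 => /eqP ->.
rewrite leq_eqVlt => /orP[/eqP -> //|]; rewrite ltnS; apply: IH.
apply: contra neq => /eqP e; apply/eqP; rewrite [W X n.+2]/= -e -[(W X n * X)%g]/(W X n.+1) -e; exact: e.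
Qed.

Lemma W_key X k : 1%g \in X -> {in X, forall x, x^-1 \in X}%g ->
  W X k.+2 != W X k.+1 -> (#|W X k| + #|X| <= #|W X k.+3|)%N.
Proof.
move=> X1 XV neq.
have : W X k.+1 \proper W X k.+2 by rewrite properEneq eq_sym neq W_succ.
case/properP => _ [u uW unW].
have dis : W X k :&: (u *: X)%g = set0.
  apply/setP => z; rewrite !inE mem_lcoset; apply/negbTE/negP => /andP[zW zX].
  apply: (negP unW); have -> : u = (z * (u^-1 * z)^-1)%g by rewrite invMg invgK mulgA mulgV mul1g.
  by rewrite /= mem_mulg // XV.
have sub : W X k :|: (u *: X)%g \subset W X k.+3.
  apply/subsetP => z; rewrite inE => /orP[zW|].
    apply: (subsetP (W_succ _ X1)); apply: (subsetP (W_succ _ X1)).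
    exact: (subsetP (W_succ _ X1)).
  rewrite mem_lcoset => zX.
  have -> : z = (u * (u^-1 * z))%g by rewrite mulgA mulgV mul1g.
  by rewrite /= mem_mulg.
have := cardsUI (W X k) (u *: X)%g; rewrite dis cards0 addn0 card_lcoset => <-.
exact: subset_leq_card.
Qed.

Lemma W_count3 X j : 1%g \in X -> {in X, forall x, x^-1 \in X}%g ->
  W X (3 * j)%N != W X (3 * j)%N.+1 -> (j.+1 * #|X| <= #|W X (3 * j)%N.+1|)%N.
Proof.
move=> X1 XV; elim: j => [|j IH] neq.
  by rewrite /= mul1g mul1n.
have e : (3 * j.+1 = (3 * j).+3)%N by rewrite mulnS addnC addn3.
rewrite e in neq *.
have n1 : W X (3 * j)%N.+3 != W X (3 * j)%N.+2.
  by rewrite eq_sym; apply: (W_prop neq); rewrite leqnSn.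
have n0 : W X (3 * j)%N != W X (3 * j)%N.+1 by apply: (W_prop neq); rewrite leqW // leqW.
have := W_key X1 XV n1; have := IH n0.
rewrite mulSn; lia.
Qed.

Lemma W_count X n : 1%g \in X -> {in X, forall x, x^-1 \in X}%g ->
  W X n != W X n.+1 -> (n.+1 * #|X| <= 3 * #|<<X>>|)%N.
Proof.
move=> X1 XV neq.
set j := (n %/ 3)%N.
have hj : (3 * j <= n)%N by rewrite /j; lia.
have hn : (n.+1 <= 3 * j.+1)%N.
  by rewrite /j; lia.
have := W_count3 X1 XV (W_prop neq hj).
have : (#|W X (3 * j)%N.+1| <= #|<<X>>|)%N by apply: subset_leq_card; apply: W_gen.
move=> h1 h2.
apply: leq_trans (leq_mul hn (leqnn #|X|)) _.
rewrite -mulnA leq_mul2l /=; exact: leq_trans h2 h1.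
Qed.

Lemma W_prod X n (c : 'I_n -> gT) : (forall i, c i \in X) -> (\prod_i c i)%g \in W X n.
Proof.
elim: n c => [|n IH] c cX; first by rewrite big_ord0 /= inE.
by rewrite big_ord_recr /= mem_mulg ?IH.
Qed.

Lemma W_all X x : 1%g \in X -> {in X, forall x, x^-1 \in X}%g -> x \in <<X>>%g ->
  exists n, x \in W X n /\ (n * #|X| <= 3 * #|<<X>>|)%N.
Proof.
move=> X1 XV /gen_prodgP [n [c cX ->]].
move: (W_prod cX); move: (\prod_i c i)%g => y yW; clear c cX; move: yW.
elim: n => [|n IH] yW; first by exists 0%N; rewrite mul0n.
case: (boolP (y \in W X n)) => [/IH //| ynW].
exists n.+1; split => //; apply: W_count => //.
by apply: contraNneq ynW => ->.
Qed.

End Aux.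
Unset Implicit Arguments. Set Strict Implicit.

Lemma W_index (R : realType) (gT : finGroupType) (K : {group gT}) (X : {set gT}) (c : R) n x :
  0 <= c -> (forall y, y \in X -> (#|K : 'C_K[y]|)%g%:R <= c) -> x \in W X n ->
  (#|K : 'C_K[x]|)%g%:R <= c ^+ n.
Proof.
move=> c0 hX; elim: n x => [|n IH] x /=.
  rewrite inE => /eqP ->.
  by rewrite cent11T setIT indexgg expr0.
case/mulsgP => w y wW yX ->.
apply: (@le_trans _ _ ((#|K : 'C_K[w]|)%g * (#|K : 'C_K[y]|)%g)%N%:R).
  by rewrite ler_nat index_centM.
rewrite natrM exprSr; apply: ler_pM => //; [exact: IH | exact: hX].
Qed.

Theorem lemma2p8 (R : realType) (gT : finGroupType) (H K : {group gT}) (eps : R) :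
  0 < eps -> eps <= commprob R H K ->
  exists X : {set gT},
    [/\ X \subset H,
        ((#|H : <<X>>|)%g%:R <= 2 / eps - 1 :> R),
        (forall x, x \in X -> (#|K : 'C_K[x]|)%g%:R <= 2 / eps :> R)
      & (forall x, x \in <<X>>%g -> (#|K : 'C_K[x]|)%g%:R <= powR (2 / eps) (6 / eps) :> R)].
Proof.
move=> eps0 heps.
set c := 2 / eps.
have c0 : 0 < c by rewrite divr_gt0.
pose X := [set x in H | (#|K : 'C_K[x]|)%g%:R <= c].
have HK0 : (0 < #|H| * #|K|)%N by rewrite muln_gt0 !cardG_gt0.
have hp1 : commprob R H K <= 1.
  rewrite /commprob ler_pdivrMr ?mul1r ?ltr0n // ler_nat -cardsX.
  by apply: subset_leq_card; apply/subsetP => p; rewrite in_set => /andP[].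
have e1 : eps <= 1 := le_trans heps hp1.
have c1 : 1 <= c.
  by rewrite /c ler_pdivlMr // mul1r; apply: le_trans e1 _; rewrite ler1n.
have X1 : 1%g \in X.
  by rewrite in_set group1 /= cent11T setIT indexgg.
have XV : {in X, forall x, x^-1 \in X}%g.
  by move=> x; rewrite !in_set groupV cent1Vg.
have XH : X \subset H by apply/subsetP => x; rewrite in_set => /andP[].
have hcnt : #|[set p in setX H K | (p.1 * p.2 == p.2 * p.1)%g]| =
    (\sum_(x in H) #|('C_K[x])%g|)%N.
  rewrite (eq_bigr (fun x => \sum_(y in ('C_K[x])%g) 1)%N); last by move=> x _; rewrite sum1_card.
  rewrite pair_big_dep -sum1_card; apply: eq_bigl => [[x y]] /=.
  by rewrite in_set in_setX in_setI cent1E (eq_sym (y * x)%g) andbA.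
have hS : eps * (#|H| * #|K|)%N%:R <= \sum_(x in H) (#|('C_K[x])%g|)%:R.
  rewrite -natr_sum -hcnt; move: heps; rewrite /commprob ler_pdivlMr // ltr0n //.
set k : R := #|K|%:R.
have k0 : 0 < k by rewrite ltr0n cardG_gt0.
pose a := k * eps / 2; pose b := k - a.
have hpt : forall x, x \in H -> (#|('C_K[x])%g|)%:R <= a + (if x \in X then b else 0).
  move=> x xH; case: ifP => xX.
    rewrite /b addrC subrK ler_nat; apply: subset_leq_card; exact: subsetIl.
  rewrite addr0.
  have Lg := Lagrange (subsetIl K ('C[x])%g).
  move: xX; rewrite in_set xH /= => /negbT; rewrite -ltNge => hlt.
  have -> : a = k / c by rewrite /a /c invf_div mulrA.
  rewrite ler_pdivlMr //; apply: (@le_trans _ _ ((#|('C_K[x])%g|)%:R * (#|K : 'C_K[x]|)%g%:R)).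
    by apply: ler_wpM2l => //; apply: ltW.
  by rewrite -natrM Lg.
have hsum : \sum_(x in H) (#|('C_K[x])%g|)%:R <= #|H|%:R * a + b * #|X|%:R.
  apply: le_trans (ler_sum _ hpt) _.
  rewrite big_split /= sumr_const -big_mkcondr /=.
  rewrite (eq_bigl (fun x => x \in X)); last first.
    by move=> x /=; apply/andP/idP => [[] //|xX]; split => //; apply: (subsetP XH).
  by rewrite sumr_const mulr_natl mulr_natr.
set h : R := #|H|%:R.
set xx : R := #|X|%:R.
have x0 : 0 < xx by rewrite ltr0n card_gt0; apply/set0Pn; exists 1%g.
have key : eps * h <= (2 - eps) * xx.
  move: (le_trans hS hsum); rewrite natrM -/h -/k /b /a => hh.
  nra.
have sGH : (<<X>> \subset H)%g by rewrite gen_subG.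
have Lg := Lagrange sGH.
have hXG : (#|X| <= #|(<<X>>)%g|)%N by apply: subset_leq_card; apply: subset_gen.
have hGH : (#|(<<X>>)%g| <= #|H|)%N by apply: subset_leq_card.
exists X; split => //.
- set idx := (#|H : <<X>>|)%g.
  have hi : xx * idx%:R <= h.
    rewrite /xx /h -natrM ler_nat -Lg leq_mul2r hXG orbT //.
  have hi2 : eps * (xx * idx%:R) <= eps * h by apply: ler_wpM2l => //; apply: ltW.
  have hi3 : idx%:R * eps <= 2 - eps by nra.
  have -> : 2 / eps - 1 = (2 - eps) / eps by rewrite mulrBl divff // gt_eqF.
  by rewrite ler_pdivlMr.
- by move=> x; rewrite in_set => /andP[].
- move=> x xG.
  have [n [xW hn]] := W_all X1 XV xG.
  apply: le_trans (@W_index R gT K X c n x (ltW c0) _ xW) _.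
    by move=> y; rewrite in_set => /andP[].
  rewrite -powR_mulrn; last exact: ltW c0.
  apply: ler_powR => //.
  have hn' : n%:R * xx <= 3 * h.
    rewrite /xx /h -natrM -(natrM _ 3) ler_nat; apply: leq_trans hn _; rewrite leq_mul2l hGH orbT //.
  have hn2 : eps * (n%:R * xx) <= eps * (3 * h) by apply: ler_wpM2l => //; apply: ltW.
  have hn3 : n%:R * eps <= 6 by nra.
  by rewrite ler_pdivlMr.
Qed.
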